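(* Let $m \in \mathbb N$ and let $\phi \colon \mathcal H_2^0 \to M_m$ be a map. Then the following are equivalent: (i) $\phi$ is real linear and $\phi(\mathcal{IH}_2^0) \subset \mathcal U_m$; (ii) there exist $U, V \in \mathcal U_m$ and $n \in \mathbb N$ such that $m = 2n$ and $\phi(A) = U(A \otimes I_n)V$ for all $A \in \mathcal H_2^0$.
   Context: $M_m$ is the set of $m\times m$ complex matrices, $\mathcal U_m$ the unitary ones, $\mathcal H_2^0$ the real vector space of trace-zero $2\times 2$ complex hermitian matrices, $\mathcal{IH}_2^0 = \mathcal H_2^0 \cap \mathcal U_2$, $I_n$ the identity matrix and $\otimes$ the Kronecker product. *)

(* Defs.v *)
From HB Require Import structures.
From mathcomp Require Import all_boot all_order all_algebra.
From mathcomp Require Import complex mxtens.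
From mathcomp Require Import reals Rstruct.
Set Implicit Arguments. Unset Strict Implicit. Unset Printing Implicit Defensive.
Import Order.TTheory GRing.Theory Num.Theory.
Local Open Scope ring_scope.

Definition C : numClosedFieldType := (Rdefinitions.R)[i].

Definition adjmx (m n : nat) (A : 'M[C]_(m, n)) : 'M[C]_(n, m) :=
  (map_mx Num.conj A)^T.

Definition unitary (m : nat) (U : 'M[C]_m) : Prop := adjmx U *m U = 1%:M.

Definition herm0 (A : 'M[C]_2) : Prop := adjmx A = A /\ \tr A = 0.

Definition iherm0 (A : 'M[C]_2) : Prop := herm0 A /\ unitary A.

Definition real_linear_on_herm0 (m : nat) (phi : 'M[C]_2 -> 'M[C]_m) : Prop :=
  forall (a b : C) (A B : 'M[C]_2),
    a \is Num.real -> b \is Num.real -> herm0 A -> herm0 B ->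
    phi (a *: A + b *: B) = a *: phi A + b *: phi B.

(* Main.v *)
Require Import Defs.
From HB Require Import structures.
From mathcomp Require Import all_boot all_order all_algebra.
From mathcomp Require Import complex mxtens.
From mathcomp Require Import spectral.
From mathcomp Require Import ring.
Set Implicit Arguments. Unset Strict Implicit. Unset Printing Implicit Defensive.
Import Order.TTheory GRing.Theory Num.Theory.
Local Open Scope ring_scope.

Lemma adjmxE m n (A : 'M[C]_(m, n)) i j : adjmx A i j = (A j i)^*.
Proof. by rewrite /adjmx !mxE. Qed.

Lemma adjmxK m n (A : 'M[C]_(m, n)) : adjmx (adjmx A) = A.
Proof. by apply/matrixP=> i j; rewrite !adjmxE conjCK. Qed.

Lemma adjmxD m n (A B : 'M[C]_(m, n)) : adjmx (A + B) = adjmx A + adjmx B.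
Proof. by apply/matrixP=> i j; rewrite !adjmxE !mxE rmorphD. Qed.

Lemma adjmxN m n (A : 'M[C]_(m, n)) : adjmx (- A) = - adjmx A.
Proof. by apply/matrixP=> i j; rewrite !adjmxE !mxE rmorphN. Qed.

Lemma adjmxZ m n (a : C) (A : 'M[C]_(m, n)) : adjmx (a *: A) = a^* *: adjmx A.
Proof. by apply/matrixP=> i j; rewrite !adjmxE !mxE rmorphM. Qed.

Lemma adjmxM m n p (A : 'M[C]_(m, n)) (B : 'M[C]_(n, p)) :
  adjmx (A *m B) = adjmx B *m adjmx A.
Proof.
apply/matrixP=> i j; rewrite !mxE rmorph_sum; apply: eq_bigr => k _.
by rewrite !adjmxE rmorphM mulrC.
Qed.

Lemma adjmx1 n : adjmx (1%:M : 'M[C]_n) = 1%:M.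
Proof. by apply/matrixP=> i j; rewrite adjmxE !mxE eq_sym rmorph_nat. Qed.

Lemma adjmx0 m n : adjmx (0 : 'M[C]_(m, n)) = 0.
Proof. by apply/matrixP=> i j; rewrite adjmxE !mxE rmorph0. Qed.

Lemma unitaryC n (U : 'M[C]_n) : unitary U -> U *m adjmx U = 1%:M.
Proof. exact: mulmx1C. Qed.

Lemma unitaryM n (U V : 'M[C]_n) : unitary U -> unitary V -> unitary (U *m V).
Proof.
rewrite /unitary => hU hV; rewrite adjmxM mulmxA -(mulmxA (adjmx V)) hU.
by rewrite mulmx1.
Qed.

Lemma unitary_unitarymx m n (W : 'M[C]_(m, n)) :
  W \is unitarymx -> W *m adjmx W = 1%:M.
Proof. by move/unitarymxP; rewrite /adjmx map_trmx. Qed.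

Lemma tens1mx n : (1%:M : 'M[C]_2) *t (1%:M : 'M[C]_n) = 1%:M.
Proof.
apply/matrixP=> i j.
case: (mxtens_indexP i)=> i0 i1; case: (mxtens_indexP j)=> j0 j1.
rewrite tensmxE !mxE (can_eq (@mxtens_indexK _ _)) xpair_eqE.
by rewrite -natrM mulnb.
Qed.

Lemma tensmxDl m n p q (A B : 'M[C]_(m, n)) (M : 'M[C]_(p, q)) :
  (A + B) *t M = A *t M + B *t M.
Proof. by apply/matrixP=> i j; rewrite !mxE mulrDl. Qed.

Lemma tensmxZl m n p q (a : C) (A : 'M[C]_(m, n)) (M : 'M[C]_(p, q)) :
  (a *: A) *t M = a *: (A *t M).
Proof. by apply/matrixP=> i j; rewrite !mxE mulrA. Qed.

Lemma adjmx_tens m n p q (A : 'M[C]_(m, n)) (M : 'M[C]_(p, q)) :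
  adjmx (A *t M) = adjmx A *t adjmx M.
Proof. by apply/matrixP=> i j; rewrite !mxE rmorphM. Qed.

Lemma castmx_mulmx n m (e : n = m) (A B : 'M[C]_n) :
  castmx (e, e) (A *m B) = castmx (e, e) A *m castmx (e, e) B.
Proof. by case: m / e. Qed.

Definition s1 : 'M[C]_2 := \matrix_(i, j) (if i == j then 0 else 1).
Definition s2 : 'M[C]_2 :=
  \matrix_(i, j) (if i == j then 0 else if i == 0 then - 'i else 'i).
Definition s3 : 'M[C]_2 :=
  \matrix_(i, j) (if i == j then (if i == 0 then 1 else -1) else 0).
Definition J2 : 'M[C]_2 :=
  \matrix_(i, j) (if i == j then (if i == 0 then 'i else - 'i) else 0).
Definition J3 : 'M[C]_2 :=
  \matrix_(i, j) (if i == j then 0 else if i == 0 then -1 else 1).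

Lemma big_ord2 (F : 'I_2 -> C) : \sum_(i < 2) F i = F 0 + F 1.
Proof. by rewrite !big_ord_recl big_ord0 addr0 /=; congr (F _ + F _); apply: val_inj. Qed.

Ltac m2 := apply/matrixP;
  case=> [[|[|//]]] ?; case=> [[|[|//]]] ?;
  rewrite ?adjmxE !mxE ?big_ord2 ?mxE /=.

Lemma ci2 : 'i * 'i = -1 :> C. Proof. by rewrite -expr2 sqrCi. Qed.

Lemma conjCNi : (- 'i)^* = 'i :> C. Proof. by rewrite -{2}(conjCK 'i) conjCi. Qed.

Ltac toC := match goal with |- ?a = ?b => change (a = b :> C) end.
Ltac m2c := m2; toC; rewrite ?conjC0 ?conjC1 ?conjCN1 ?conjCi ?conjCNi ?opprK;
  rewrite ?mulrN ?mulNr ?ci2 ?opprK; try ring.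

Lemma s11 : s1 *m s1 = 1%:M. Proof. m2. rewrite ?mulrN ?mulNr ?ci2 ?opprK. all: match goal with |- ?a = ?b => change (a = b :> C) end; ring. Qed.
Lemma s22 : s2 *m s2 = 1%:M. Proof. m2c. Qed.
Lemma s33 : s3 *m s3 = 1%:M. Proof. m2c. Qed.
Lemma s12 : s1 *m s2 + s2 *m s1 = 0. Proof. m2c. Qed.
Lemma s13 : s1 *m s3 + s3 *m s1 = 0. Proof. m2c. Qed.
Lemma s23 : s2 *m s3 + s3 *m s2 = 0. Proof. m2c. Qed.
Lemma s1s2 : s1 *m s2 = J2. Proof. m2c. Qed.
Lemma s1s3 : s1 *m s3 = J3. Proof. m2c. Qed.

Lemma herm0s1 : herm0 s1.
Proof. split; first by m2c. by rewrite /mxtrace big_ord2 !mxE /= addr0. Qed.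
Lemma herm0s2 : herm0 s2.
Proof. split; first by m2c. by rewrite /mxtrace big_ord2 !mxE /= addr0. Qed.
Lemma herm0s3 : herm0 s3.
Proof. split; first by m2c. by rewrite /mxtrace big_ord2 !mxE /= subrr. Qed.

Lemma cD (x y : C) : (x + y)^* = x^* + y^*. Proof. exact: rmorphD. Qed.
Lemma cB (x y : C) : (x - y)^* = x^* - y^*. Proof. exact: rmorphB. Qed.
Lemma cM (x y : C) : (x * y)^* = x^* * y^*. Proof. exact: rmorphM. Qed.
Lemma cN (x : C) : (- x)^* = - x^*. Proof. exact: rmorphN. Qed.

Lemma mx2P (M N : 'M[C]_2) : M 0 0 = N 0 0 -> M 0 1 = N 0 1 ->
  M 1 0 = N 1 0 -> M 1 1 = N 1 1 -> M = N.
Proof.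
move=> h00 h01 h10 h11; apply/matrixP => i j.
have [-> | ->] : i = 0 \/ i = 1 by case: i => [[|[|//]]] ?; [left|right]; apply: val_inj.
  by have [-> | ->] : j = 0 \/ j = 1 by case: j => [[|[|//]]] ?; [left|right]; apply: val_inj.
by have [-> | ->] : j = 0 \/ j = 1 by case: j => [[|[|//]]] ?; [left|right]; apply: val_inj.
Qed.

Ltac iring c := apply/eqP; rewrite -subr_eq0; apply/eqP;
  transitivity (c * ('i * 'i + 1)); [field; rewrite ?pnatr_eq0 // | by rewrite ci2 addNr mulr0].

Lemma tens2 n (e : (2 * n)%N = (n + n)%N) (A : 'M[C]_2) :
  castmx (e, e) (A *t (1%:M : 'M[C]_n)) =
  block_mx (A 0 0)%:M (A 0 1)%:M (A 1 0)%:M (A 1 1)%:M.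
Proof.
apply/matrixP => i j; rewrite castmxE.
have hl (k : 'I_n) : cast_ord (esym e) (lshift n k) = mxtens_index (0, k).
  by apply: val_inj => /=; rewrite ?mul0n.
have hr (k : 'I_n) : cast_ord (esym e) (rshift n k) = mxtens_index (1, k).
  by apply: val_inj => /=; rewrite ?mul1n.
case: (split_ordP i) => i' ->; case: (split_ordP j) => j' ->;
rewrite ?hl ?hr tensmxE ?block_mxEul ?block_mxEur ?block_mxEdl ?block_mxEdr !mxE mulr_natr //.
Qed.

Lemma herm0_comb (a b : C) (A B : 'M[C]_2) :
  a \is Num.real -> b \is Num.real -> herm0 A -> herm0 B -> herm0 (a *: A + b *: B).
Proof.
move=> ra rb [hA tA] [hB tB]; split.
  by rewrite adjmxD !adjmxZ hA hB !conj_Creal.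
by rewrite mxtraceD !mxtraceZ tA tB !mulr0 addr0.
Qed.

Lemma herm0_decomp (A : 'M[C]_2) : herm0 A ->
  exists x1 x2 x3 : C, [/\ x1 \is Num.real, x2 \is Num.real, x3 \is Num.real &
    A = 1 *: (x1 *: s1 + x2 *: s2) + x3 *: s3].
Proof.
move=> [hA tA].
have e00 : (A 0 0)^* = A 0 0 by rewrite -{2}hA adjmxE.
have e10 : (A 0 1)^* = A 1 0 by rewrite -{2}hA adjmxE.
have e01 : (A 1 0)^* = A 0 1 by rewrite -{2}hA adjmxE.
have e11 : A 1 1 = - A 0 0.
  by apply/eqP; rewrite -addr_eq0 addrC; apply/eqP; move: tA; rewrite /mxtrace big_ord2.
have c2 : (2^-1 : C)^* = 2^-1 by rewrite conj_Creal // rpredV realn.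
exists ((A 0 1 + A 1 0) / 2), ('i * (A 0 1 - A 1 0) / 2), (A 0 0); split.
- by rewrite CrealE cM cD e10 e01 c2 addrC.
- rewrite CrealE !cM cB e10 e01 c2 conjCi; apply/eqP.
  toC; ring.
- by rewrite CrealE e00.
- rewrite scale1r; apply: mx2P; rewrite !mxE /= ?e11; toC.
  + ring.
  + iring ((A 0 1 - A 1 0) / 2).
  + iring (- ((A 0 1 - A 1 0) / 2)).
  + ring.
Qed.

Lemma adjmx_col m1 m2 n (X : 'M[C]_(m1, n)) (Y : 'M[C]_(m2, n)) :
  adjmx (col_mx X Y) = row_mx (adjmx X) (adjmx Y).
Proof. by rewrite /adjmx map_col_mx tr_col_mx. Qed.

Lemma scalar_mx0C n : (0 : C)%:M = 0 :> 'M[C]_n.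
Proof. by apply/matrixP=> i j; rewrite !mxE mul0rn. Qed.

Lemma J2_block n (e : (2 * n)%N = (n + n)%N) :
  castmx (e, e) (J2 *t (1%:M : 'M[C]_n)) = block_mx ('i)%:M 0 0 (- 'i)%:M.
Proof. by rewrite tens2 !mxE /= !scalar_mx0C. Qed.

Lemma J3_block n (e : (2 * n)%N = (n + n)%N) :
  castmx (e, e) (J3 *t (1%:M : 'M[C]_n)) = block_mx 0 (-1)%:M 1%:M 0.
Proof. by rewrite tens2 !mxE /= !scalar_mx0C. Qed.

Lemma colW_unit m n (Q3 : 'M[C]_m) (B : 'M[C]_(n, m)) :
  Q3 *m Q3 = - 1%:M -> adjmx Q3 = - Q3 ->
  B *m adjmx B = 1%:M -> B *m Q3 *m adjmx B = 0 ->
  col_mx B (- (B *m Q3)) *m adjmx (col_mx B (- (B *m Q3))) = 1%:M.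
Proof.
move=> h33 a3 BB X0.
rewrite adjmx_col mul_col_row adjmxN adjmxM a3 (scalar_mx_block n n 1).
congr block_mx.
+ exact: BB.
+ by rewrite mulNmx opprK mulmxA X0.
+ by rewrite mulNmx X0 oppr0.
+ by rewrite !mulNmx opprK -!mulmxA (mulmxA Q3) h33 mulNmx mul1mx mulmxN opprK BB.
Qed.

Lemma core_sq n (Q2 Q3 : 'M[C]_(n + n)) (B : 'M[C]_(n, n + n)) :
  Q3 *m Q3 = - 1%:M -> Q2 *m Q3 = - (Q3 *m Q2) -> adjmx Q3 = - Q3 ->
  B *m adjmx B = 1%:M -> B *m Q2 = 'i *: B -> B *m Q3 *m adjmx B = 0 ->
  exists (e : (2 * n)%N = (n + n)%N) (W : 'M[C]_(n + n)), unitary W /\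
    W *m Q2 = castmx (e, e) (J2 *t (1%:M : 'M[C]_n)) *m W /\
    W *m Q3 = castmx (e, e) (J3 *t (1%:M : 'M[C]_n)) *m W.
Proof.
move=> h33 h23 a3 BB BQ2 X0.
have e : (2 * n)%N = (n + n)%N by rewrite mul2n addnn.
exists e, (col_mx B (- (B *m Q3))); split; [|split].
- by apply: mulmx1C; apply: colW_unit.
- rewrite J2_block mul_col_mx mul_block_col !mul0mx addr0 add0r !mul_scalar_mx.
  congr col_mx; first exact: BQ2.
  rewrite mulNmx -mulmxA -[Q3 *m Q2]opprK -h23 mulmxN opprK mulmxA BQ2.
  by rewrite -scalemxAl scaleNr scalerN opprK.
- rewrite J3_block mul_col_mx mul_block_col !mul0mx addr0 add0r !mul_scalar_mx.
  rewrite scaleN1r opprK scale1r; congr col_mx.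
  by rewrite mulNmx -mulmxA h33 mulmxN mulmx1 opprK.
Qed.

Lemma scNmx m : ((-1 : C)%:M = - 1%:M :> 'M[C]_m).
Proof. by apply/matrixP=> i j; rewrite !mxE mulNrn. Qed.

Lemma core m (Q2 Q3 : 'M[C]_m) :
  Q2 *m Q2 = - 1%:M -> Q3 *m Q3 = - 1%:M -> Q2 *m Q3 = - (Q3 *m Q2) ->
  adjmx Q2 = - Q2 -> adjmx Q3 = - Q3 ->
  exists n (e : (2 * n)%N = m) (W : 'M[C]_m), unitary W /\
    W *m Q2 = castmx (e, e) (J2 *t (1%:M : 'M[C]_n)) *m W /\
    W *m Q3 = castmx (e, e) (J3 *t (1%:M : 'M[C]_n)) *m W.
Proof.
move=> h22 h33 h23 a2 a3.
pose S := kermx (Q2 - 'i%:M).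
pose B := schmidt (row_base S).
have Bu : B \is unitarymx by apply: schmidt_unitarymx; exact: rank_leq_col.
have BB := unitary_unitarymx Bu.
have BS : (B :=: S)%MS := eqmx_trans (eqmx_schmidt_free (row_base_free S)) (eq_row_base S).
have BQ2 : B *m Q2 = 'i *: B.
  have : (B <= S)%MS by rewrite BS submx_refl.
  by rewrite sub_kermx mulmxBr mul_mx_scalar subr_eq0 => /eqP.
have a2B : Q2 *m adjmx B = 'i *: adjmx B.
  have := congr1 (@adjmx _ _) BQ2; rewrite adjmxM adjmxZ a2 conjCi mulNmx scaleNr.
  exact: oppr_inj.
have X0 : B *m Q3 *m adjmx B = 0.
  have h1 : B *m Q3 *m Q2 *m adjmx B = 'i *: (B *m Q3 *m adjmx B).
    by rewrite -(mulmxA (B *m Q3)) a2B -scalemxAr.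
  have h2 : B *m Q3 *m Q2 *m adjmx B = - ('i *: (B *m Q3 *m adjmx B)).
    rewrite -(mulmxA B Q3 Q2) -[Q3 *m Q2]opprK -h23 mulmxN mulNmx mulmxA BQ2.
    by rewrite -!scalemxAl.
  have : ('i + 'i) *: (B *m Q3 *m adjmx B) = 0 by rewrite scalerDl -{1}h1 h2 addNr.
  move/eqP; rewrite scaler_eq0 => /orP [|/eqP //].
  by rewrite -mulr2n mulrn_eq0 /= (negbTE (neq0Ci C)).
pose W0 := col_mx B (- (B *m Q3)).
have WW : W0 *m adjmx W0 = 1%:M by apply: colW_unit.
have rk : \rank W0 = (\rank S + \rank S)%N.
  by apply: mxrank_unitary; apply/unitarymxP; rewrite -map_trmx.
have hTT : (Q2 + 'i%:M) *m (Q2 - 'i%:M) = 0.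
  rewrite mulmxDl !mulmxBr h22 mul_mx_scalar !mul_scalar_mx scale_scalar_mx ci2.
  by rewrite addrA subrK scNmx subrr.
have hTQ : (Q2 - 'i%:M) *m Q3 = - (Q3 *m (Q2 + 'i%:M)).
  rewrite mulmxBl mulmxDr h23 mul_mx_scalar mul_scalar_mx.
  by rewrite opprD.
have full : (1%:M <= W0)%MS.
  have e1 : 1%:M = (- 'i / 2) *: (Q2 + 'i%:M) + ('i / 2) *: (Q2 - 'i%:M) :> 'M[C]_m.
    apply/matrixP => i j; rewrite !mxE; case: (_ == _) => /=; toC.
    + iring (1 : C).
    + iring (0 : C).
  rewrite /W0 -addsmxE e1; apply: addmx_sub_adds.
    by rewrite BS sub_kermx -scalemxAl hTT scaler0.
  have : ((('i / 2) *: (Q2 - 'i%:M)) *m Q3 <= B)%MS.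
    by rewrite BS sub_kermx -scalemxAl hTQ -scalemxAl mulNmx -mulmxA hTT mulmx0 oppr0 scaler0.
  case/submxP => Z hZ.
  have -> : ('i / 2) *: (Q2 - 'i%:M) = Z *m (- (B *m Q3)).
    by rewrite mulmxN mulmxA -hZ -mulmxA h33 mulmxN mulmx1 opprK.
  exact: submxMl.
have e' : (\rank S + \rank S)%N = m.
  apply/eqP; rewrite eqn_leq -rk rank_leq_col /=.
  by rewrite -{1}(mxrank1 C m) mxrankS.
clearbody B; clear rk full W0 WW a2B Bu BS.
move: B BB BQ2 X0 e'; move: (\rank S) => k B BB BQ2 X0 e'.
clear S.
case: m / e' in Q2 Q3 h22 h33 h23 a2 a3 B BB BQ2 X0 hTT hTQ *.
have [e [W [Wu [W2 W3]]]] := core_sq h33 h23 a3 BB BQ2 X0.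
by exists k, e, W.
Qed.

Lemma comb_alg (V : lmodType C) (o u w : V) (c s : C) :
  c * c + s * s = 1 -> u + w = 0 ->
  (c * c) *: o + (c * s) *: u + ((s * c) *: w + (s * s) *: o) = o.
Proof.
move=> h1 h2.
by rewrite (mulrC s c) (addrC ((c * c) *: o)) addrACA -scalerDr h2 scaler0 add0r
  -scalerDl h1 scale1r.
Qed.

Lemma comb_alg2 (V : lmodType C) (o u w : V) (c s : C) :
  c * c + s * s = 1 -> c * s != 0 ->
  (c * c) *: o + (c * s) *: u + ((s * c) *: w + (s * s) *: o) = o -> u + w = 0.
Proof.
move=> h1 hcs H.
have E : (c * s) *: (u + w) + o = o.
  rewrite -{2}H (mulrC s c) (addrC ((c * c) *: o)) addrACA -scalerDr.
  by rewrite -scalerDl h1 scale1r.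
have : (c * s) *: (u + w) = 0 by rewrite -(addrK o ((c * s) *: (u + w))) E subrr.
by move/eqP; rewrite scaler_eq0 (negbTE hcs) /= => /eqP.
Qed.

Lemma expand_sq m (A B X Y : 'M[C]_m) (c s : C) :
  (c *: A + s *: B) *m (c *: X + s *: Y) =
  (c * c) *: (A *m X) + (c * s) *: (A *m Y) + ((s * c) *: (B *m X) + (s * s) *: (B *m Y)).
Proof. by rewrite mulmxDl !mulmxDr -!scalemxAl -!scalemxAr !scalerA. Qed.

Lemma tens_lin n (U V : 'M[C]_(2 * n)) (a b : C) (X Y : 'M[C]_2) :
  U *m ((a *: X + b *: Y) *t (1%:M : 'M[C]_n)) *m V =
  a *: (U *m (X *t 1%:M) *m V) + b *: (U *m (Y *t 1%:M) *m V).
Proof. by rewrite tensmxDl !tensmxZl mulmxDr mulmxDl -!scalemxAr -!scalemxAl. Qed.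

Lemma tens_unitary n (A : 'M[C]_2) : unitary A -> unitary (A *t (1%:M : 'M[C]_n)).
Proof. by rewrite /unitary adjmx_tens adjmx1 tensmx_mul => ->; rewrite mulmx1 tens1mx. Qed.

Lemma c35 : (3 / 5 : C) * (3 / 5) + (4 / 5) * (4 / 5) = 1.
Proof. by field. Qed.

Lemma c35nz : (3 / 5 : C) * (4 / 5) != 0.
Proof. by rewrite !mulf_eq0 !invr_eq0 !pnatr_eq0. Qed.

Lemma c3r : (3 / 5 : C) \is Num.real.
Proof. by rewrite rpredM ?rpredV ?realn. Qed.
Lemma c4r : (4 / 5 : C) \is Num.real.
Proof. by rewrite rpredM ?rpredV ?realn. Qed.

Lemma herm_unitary (A : 'M[C]_2) : herm0 A -> A *m A = 1%:M -> iherm0 A.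
Proof. by move=> [hA tA] AA; split; [split | rewrite /unitary hA]. Qed.

Unset Implicit Arguments.

Theorem proposition3p4 (m : nat) (phi : 'M[C]_2 -> 'M[C]_m) :
  (real_linear_on_herm0 phi /\ (forall A, iherm0 A -> unitary (phi A)))
  <->
  (exists (U V : 'M[C]_m) (n : nat) (e : (2 * n)%N = m),
      unitary U /\ unitary V /\
      forall A : 'M[C]_2, herm0 A ->
        phi A = U *m castmx (e, e) (A *t (1%:M : 'M[C]_n)) *m V).
Proof.
split; last first.
  case=> U [V [n [e [hU [hV hphi]]]]].
  case: m / e in phi U V hU hV hphi *.
  split.
    move=> a b A B ra rb hA hB.
    rewrite !hphi //; last exact: herm0_comb. by rewrite !(castmx_id (erefl _, erefl _)) tens_lin.
  move=> A [hA uA]; rewrite hphi // castmx_id.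
  by apply: unitaryM; [apply: unitaryM => //; apply: tens_unitary | ].
case=> lin hu.
have cross : forall X Y, herm0 X -> herm0 Y -> X *m X = 1%:M -> Y *m Y = 1%:M ->
    X *m Y + Y *m X = 0 -> adjmx (phi X) *m phi Y + adjmx (phi Y) *m phi X = 0.
  move=> X Y hX hY XX YY XY.
  have uX : unitary (phi X) by apply: hu; apply: herm_unitary.
  have uY : unitary (phi Y) by apply: hu; apply: herm_unitary.
  have hZ := herm0_comb c3r c4r hX hY.
  have uZ : unitary (phi ((3/5) *: X + (4/5) *: Y)).
    apply: hu; apply: herm_unitary => //.
    by rewrite expand_sq XX YY comb_alg // c35.
  move: uZ; rewrite /unitary lin //; [|exact: c3r|exact: c4r]. rewrite (adjmxD ((3/5) *: phi X)).
  rewrite (adjmxZ (3/5) (phi X)) (adjmxZ (4/5) (phi Y)) (conj_Creal c3r) (conj_Creal c4r).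
  rewrite expand_sq uX uY; apply: comb_alg2; [exact: c35 | exact: c35nz].
have iu : forall X, herm0 X -> X *m X = 1%:M -> unitary (phi X).
  by move=> X hX XX; apply: hu; apply: herm_unitary.
have u1 := iu s1 herm0s1 s11.
have u2 := iu s2 herm0s2 s22.
have u3 := iu s3 herm0s3 s33.
have c12 := cross _ _ herm0s1 herm0s2 s11 s22 s12.
have c13 := cross _ _ herm0s1 herm0s3 s11 s33 s13.
have c23 := cross _ _ herm0s2 herm0s3 s22 s33 s23.
have u1' := unitaryC u1.
have adjQ : forall X : 'M[C]_m, adjmx (adjmx (phi s1) *m X) = adjmx X *m phi s1.
  by move=> X; rewrite adjmxM adjmxK.
have qq : forall X Y : 'M[C]_m,
    adjmx (adjmx (phi s1) *m X) *m (adjmx (phi s1) *m Y) = adjmx X *m Y.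
  by move=> X Y; rewrite adjQ -mulmxA (mulmxA (phi s1)) u1' mul1mx.
have neg : forall a b : 'M[C]_m, a + b = 0 -> b = - a.
  by move=> a b /eqP; rewrite addrC addr_eq0 => /eqP.
have a2 : adjmx (adjmx (phi s1) *m phi s2) = - (adjmx (phi s1) *m phi s2).
  by rewrite adjQ; exact: neg c12.
have a3 : adjmx (adjmx (phi s1) *m phi s3) = - (adjmx (phi s1) *m phi s3).
  by rewrite adjQ; exact: neg c13.
have h22 : (adjmx (phi s1) *m phi s2) *m (adjmx (phi s1) *m phi s2) = - 1%:M.
  by rewrite -{1}[adjmx (phi s1) *m phi s2]opprK -a2 mulNmx qq u2.
have h33 : (adjmx (phi s1) *m phi s3) *m (adjmx (phi s1) *m phi s3) = - 1%:M.
  by rewrite -{1}[adjmx (phi s1) *m phi s3]opprK -a3 mulNmx qq u3.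
have h23 : (adjmx (phi s1) *m phi s2) *m (adjmx (phi s1) *m phi s3) =
    - ((adjmx (phi s1) *m phi s3) *m (adjmx (phi s1) *m phi s2)).
  rewrite -{1}[adjmx (phi s1) *m phi s2]opprK -a2 mulNmx qq.
  rewrite -{1}[adjmx (phi s1) *m phi s3]opprK -a3 mulNmx qq opprK.
  by rewrite (neg _ _ c23).
have [n [e [W [Wu [W2 W3]]]]] := core h22 h33 h23 a2 a3.
subst m.
rewrite (castmx_id (erefl _, erefl _)) in W2.
rewrite (castmx_id (erefl _, erefl _)) in W3.
have Wu' := unitaryC Wu.
have WuE : adjmx W *m W = 1%:M by exact: Wu.
exists (phi s1 *m adjmx W *m (s1 *t 1%:M)), W, n, erefl.
split.
  apply: unitaryM; first apply: unitaryM => //.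
    by rewrite /unitary adjmxK.
  by apply: tens_unitary; rewrite /unitary herm0s1.1 s11.
split; first exact: Wu.
move=> A hA; rewrite (castmx_id (erefl _, erefl _)).
have eU : forall X, phi s1 *m adjmx W *m (s1 *t 1%:M) *m (X *t 1%:M) *m W =
    phi s1 *m (adjmx W *m ((s1 *m X) *t 1%:M) *m W).
  by move=> X; rewrite -(mulmxA _ (s1 *t _)) tensmx_mul mulmx1 -!mulmxA.
have f1 : phi s1 *m adjmx W *m (s1 *t 1%:M) *m (s1 *t 1%:M) *m W = phi s1.
  by rewrite eU s11 tens1mx mulmx1 -[RHS]mulmx1; congr (_ *m _); apply: Wu.
have f2 : phi s1 *m adjmx W *m (s1 *t 1%:M) *m (s2 *t 1%:M) *m W = phi s2.
  by rewrite eU s1s2 -(mulmxA (adjmx W)) -W2 (mulmxA (adjmx W)) WuE mul1mx mulmxA u1' mul1mx.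
have f3 : phi s1 *m adjmx W *m (s1 *t 1%:M) *m (s3 *t 1%:M) *m W = phi s3.
  by rewrite eU s1s3 -(mulmxA (adjmx W)) -W3 (mulmxA (adjmx W)) WuE mul1mx mulmxA u1' mul1mx.
have [x1 [x2 [x3 [r1 r2 r3 ->]]]] := herm0_decomp hA.
have h12 := herm0_comb r1 r2 herm0s1 herm0s2.
rewrite !tens_lin f1 f2 f3 (lin 1 x3 (x1 *: s1 + x2 *: s2) s3) ?rpred1 ?herm0s3 //; last exact: herm0s3.
by congr (_ *: _ + _); apply: lin => //; [exact: herm0s1 | exact: herm0s2].
Qed.
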